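(* Let $\mathsf{L}\in\{\mathsf{CN4K},\mathsf{CN4K}^\pm,\mathsf{CN4K}^\curlyvee,\mathsf{CN4K}^{\Join},\mathsf{CN4K}^1\}$ and $\phi,\chi\in\mathcal{L}$. Then (disjunction property) $\mathsf{L}\models\phi\vee\chi$ iff $\mathsf{L}\models\phi$ or $\mathsf{L}\models\chi$; and (constructive falsity) $\mathsf{L}\models{\sim}(\phi\wedge\chi)$ iff $\mathsf{L}\models{\sim}\phi$ or $\mathsf{L}\models{\sim}\chi$.
   Context: Fix a countable set $\mathsf{Prop}$ of propositional variables. The language $\mathcal{L}$ is given by the grammar $\phi::=p\mid{\sim}\phi\mid(\phi\wedge\phi)\mid(\phi\vee\phi)\mid(\phi\to\phi)\mid\Box\phi\mid\Diamond\phi$ with $p\in\mathsf{Prop}$. A $\mathsf{CN4K}$ frame is a tuple $\mathfrak{F}=\langle W,\le,R^+_\Box,R^-_\Box,R^+_\Diamond,R^-_\Diamond\rangle$ where $W\neq\varnothing$, $\le$ is a preorder on $W$, and $R^+_\Box,R^-_\Box,R^+_\Diamond,R^-_\Diamond$ are arbitrary binary relations on $W$. $R(w)=\{w'\mid wRw'\}$. The frame is $\pm$-birelational if $R^+_\Box=R^+_\Diamond$ and $R^-_\Box=R^-_\Diamond$; $\curlyvee$-birelational if $R^+_\Box=R^-_\Box$ and $R^+_\Diamond=R^-_\Diamond$; $\Join$-birelational if $R^+_\Box=R^-_\Diamond$ and $R^+_\Diamond=R^-_\Box$; monorelational if all four relations coincide. A $\mathsf{CN4K}$ model is $\mathfrak{M}=\langle\mathfrak{F},v^+,v^-\rangle$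 with $v^+,v^-:\mathsf{Prop}\to2^W$ upward closed under $\le$. Support: $w\Vdash^\pm p$ iff $w\in v^\pm(p)$; $w\Vdash^+{\sim}\phi$ iff $w\Vdash^-\phi$; $w\Vdash^-{\sim}\phi$ iff $w\Vdash^+\phi$; $w\Vdash^+\phi\wedge\chi$ iff both; $w\Vdash^-\phi\wedge\chi$ iff $w\Vdash^-\phi$ or $w\Vdash^-\chi$; $w\Vdash^+\phi\vee\chi$ iff $w\Vdash^+\phi$ or $w\Vdash^+\chi$; $w\Vdash^-\phi\vee\chi$ iff both negatively supported; $w\Vdash^+\phi\to\chi$ iff for all $w'\ge w$, $w'\Vdash^+\phi$ implies $w'\Vdash^+\chi$; $w\Vdash^-\phi\to\chi$ iff $w\Vdash^+\phi$ and $w\Vdash^-\chi$; $w\Vdash^+\Box\phi$ iff $\forall w'\ge w\ \forall w''\in R^+_\Box(w')$: $w''\Vdash^+\phi$; $w\Vdash^-\Box\phi$ iff $\forall w'\ge w\ \exists w''\in R^-_\Box(w')$: $w''\Vdash^-\phi$; $w\Vdash^+\Diamond\phi$ iff $\forall w'\ge w\ \exists w''\in R^+_\Diamond(w')$: $w''\Vdash^+\phi$; $w\Vdash^-\Diamond\phi$ iff $\forall w'\ge w\ \forall w''\in R^-_\Diamond(w')$: $w''\Vdash^-\phi$. $\mathsf{CN4K}$, $\mathsf{CN4K}^\pm$, $\mathsf{CN4K}^\curlyvee$, $\mathsf{CN4K}^{\Join}$, $\mathsf{CN4K}^1$ are the logics of, respectively, all frames, $\pm$-birelational, $\curlyvee$-birelational,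 $\Join$-birelational, and monorelational frames; $\mathsf{L}\models\chi$ means $\mathfrak{M},w\Vdash^+\chi$ for every model $\mathfrak{M}$ on a frame of the class of $\mathsf{L}$ and every state $w$ of $\mathfrak{M}$. *)

(* Defs.v *)
From Stdlib Require Import Relations.

Definition Prop_var := nat.

Inductive form : Type :=
| Var : Prop_var -> form
| Neg : form -> form
| And : form -> form -> form
| Or  : form -> form -> form
| Imp : form -> form -> form
| Box : form -> form
| Dia : form -> form.

Record frame : Type := {
  W : Type;
  W_nonempty : inhabited W;
  le : W -> W -> Prop;
  le_preorder : preorder W le;
  RBp : W -> W -> Prop;
  RBm : W -> W -> Prop;
  RDp : W -> W -> Prop;
  RDm : W -> W -> Prop
}.

Record model : Type := {
  mframe : frame;
  vpos : Prop_var -> W mframe -> Prop;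
  vneg : Prop_var -> W mframe -> Prop;
  vpos_up : forall p w w', le mframe w w' -> vpos p w -> vpos p w';
  vneg_up : forall p w w', le mframe w w' -> vneg p w -> vneg p w'
}.

(* supp M true phi w  :  w ||-^+ phi ;  supp M false phi w  :  w ||-^- phi *)
Fixpoint supp (M : model) (pol : bool) (phi : form) (w : W (mframe M)) : Prop :=
  let F := mframe M in
  match phi with
  | Var p => if pol then vpos M p w else vneg M p w
  | Neg a => supp M (negb pol) a w
  | And a b => if pol then supp M true a w /\ supp M true b w
               else supp M false a w \/ supp M false b w
  | Or a b => if pol then supp M true a w \/ supp M true b w
              else supp M false a w /\ supp M false b w
  | Imp a b => if pol then
                 forall w', le F w w' -> supp M true a w' -> supp M true b w'
               else supp M true a w /\ supp M false b w
  | Box a => if pol then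
               forall w', le F w w' -> forall w'', RBp F w' w'' -> supp M true a w''
             else
               forall w', le F w w' -> exists w'', RBm F w' w'' /\ supp M false a w''
  | Dia a => if pol then
               forall w', le F w w' -> exists w'', RDp F w' w'' /\ supp M true a w''
             else
               forall w', le F w w' -> forall w'', RDm F w' w'' -> supp M false a w''
  end.

Inductive logic : Type := CN4K | CN4Kpm | CN4Kvee | CN4Kjoin | CN4K1.

Definition same_rel {W : Type} (R S : W -> W -> Prop) : Prop :=
  forall x y, R x y <-> S x y.

Definition in_class (L : logic) (F : frame) : Prop :=
  match L with
  | CN4K => True
  | CN4Kpm => same_rel (RBp F) (RDp F) /\ same_rel (RBm F) (RDm F)
  | CN4Kvee => same_rel (RBp F) (RBm F) /\ same_rel (RDp F) (RDm F)
  | CN4Kjoin => same_rel (RBp F) (RDm F) /\ same_rel (RDp F) (RBm F)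
  | CN4K1 => same_rel (RBp F) (RBm F) /\ same_rel (RBp F) (RDp F)
             /\ same_rel (RBp F) (RDm F)
  end.

Definition valid (L : logic) (chi : form) : Prop :=
  forall M : model, in_class L (mframe M) -> forall w, supp M true chi w.

(* Main.v *)
Require Import Defs.
From Stdlib Require Import Relations Classical.

Definition glue {A B : Type} (r : Prop) (R1 : A -> A -> Prop) (R2 : B -> B -> Prop)
  (x y : option (A + B)) : Prop :=
  match x, y with
  | None, _ => r
  | Some (inl a), Some (inl b) => R1 a b
  | Some (inr a), Some (inr b) => R2 a b
  | _, _ => False
  end.

Lemma glue_preorder (F1 F2 : frame) :
  preorder _ (glue True (le F1) (le F2)).
Proof.
  destruct (le_preorder F1) as [r1 t1]. destruct (le_preorder F2) as [r2 t2].
  constructor.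
  - intros [[a|a]|]; cbn; auto.
  - intros [[a|a]|] [[b|b]|] [[c|c]|]; cbn; intros; try tauto; eauto.
Qed.

Definition glue_frame (F1 F2 : frame) : frame :=
  {| W := option (W F1 + W F2);
     W_nonempty := inhabits None;
     le := glue True (le F1) (le F2);
     le_preorder := glue_preorder F1 F2;
     RBp := glue False (RBp F1) (RBp F2);
     RBm := glue False (RBm F1) (RBm F2);
     RDp := glue False (RDp F1) (RDp F2);
     RDm := glue False (RDm F1) (RDm F2) |}.

Definition gval (M1 M2 : model) (f1 : Prop_var -> W (mframe M1) -> Prop)
  (f2 : Prop_var -> W (mframe M2) -> Prop) (p : Prop_var)
  (x : option (W (mframe M1) + W (mframe M2))) : Prop :=
  match x with
  | None => False
  | Some (inl a) => f1 p a
  | Some (inr b) => f2 p b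
  end.

Lemma gval_up (M1 M2 : model) f1 f2
  (h1 : forall p w w', le (mframe M1) w w' -> f1 p w -> f1 p w')
  (h2 : forall p w w', le (mframe M2) w w' -> f2 p w -> f2 p w') :
  forall p (w w' : W (glue_frame (mframe M1) (mframe M2))),
    le (glue_frame (mframe M1) (mframe M2)) w w' ->
    gval M1 M2 f1 f2 p w -> gval M1 M2 f1 f2 p w'.
Proof.
  intros p [[a|a]|] [[b|b]|]; cbn; intros; try tauto; eauto.
Qed.

Definition glue_model (M1 M2 : model) : model :=
  {| mframe := glue_frame (mframe M1) (mframe M2);
     vpos := gval M1 M2 (vpos M1) (vpos M2);
     vneg := gval M1 M2 (vneg M1) (vneg M2);
     vpos_up := gval_up M1 M2 _ _ (vpos_up M1) (vpos_up M2);
     vneg_up := gval_up M1 M2 _ _ (vneg_up M1) (vneg_up M2) |}.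

Lemma emb_l (M1 M2 : model) (a : form) : forall pol w,
  supp (glue_model M1 M2) pol a (Some (inl w)) <-> supp M1 pol a w.
Proof.
  induction a as [p|a IHa|a1 IHa1 a2 IHa2|a1 IHa1 a2 IHa2|a1 IHa1 a2 IHa2|a IHa|a IHa];
    intros pol w; destruct pol; cbn [supp negb].
  - cbn. tauto.
  - cbn. tauto.
  - apply IHa.
  - apply IHa.
  - rewrite IHa1, IHa2. tauto.
  - rewrite IHa1, IHa2. tauto.
  - rewrite IHa1, IHa2. tauto.
  - rewrite IHa1, IHa2. tauto.
  - split.
    + intros H w' Hle H1. apply IHa2. apply (H (Some (inl w'))); [exact Hle | apply IHa1; exact H1].
    + intros H [[w'|w']|] Hle H1; cbn in Hle; try contradiction.
      apply IHa2. apply H; [exact Hle | apply IHa1; exact H1].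
  - rewrite IHa1, IHa2. tauto.
  - split.
    + intros H w' Hle w'' HR. apply IHa. apply (H (Some (inl w')) Hle (Some (inl w'')) HR).
    + intros H [[w'|w']|] Hle; cbn in Hle; try contradiction.
      intros [[w''|w'']|] HR; cbn in HR; try contradiction. apply IHa. eapply H; eauto.
  - split.
    + intros H w' Hle. destruct (H (Some (inl w')) Hle) as [[[w''|w'']|] [HR Hs]];
        cbn in HR; try contradiction. exists w''. split; [exact HR | apply IHa in Hs; exact Hs].
    + intros H [[w'|w']|] Hle; cbn in Hle; try contradiction.
      destruct (H w' Hle) as [w'' [HR Hs]]. exists (Some (inl w'')). split; [exact HR | apply IHa; exact Hs].
  - split.
    + intros H w' Hle. destruct (H (Some (inl w')) Hle) as [[[w''|w'']|] [HR Hs]];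
        cbn in HR; try contradiction. exists w''. split; [exact HR | apply IHa in Hs; exact Hs].
    + intros H [[w'|w']|] Hle; cbn in Hle; try contradiction.
      destruct (H w' Hle) as [w'' [HR Hs]]. exists (Some (inl w'')). split; [exact HR | apply IHa; exact Hs].
  - split.
    + intros H w' Hle w'' HR. apply IHa. apply (H (Some (inl w')) Hle (Some (inl w'')) HR).
    + intros H [[w'|w']|] Hle; cbn in Hle; try contradiction.
      intros [[w''|w'']|] HR; cbn in HR; try contradiction. apply IHa. eapply H; eauto.
Qed.

Lemma emb_r (M1 M2 : model) (a : form) : forall pol w,
  supp (glue_model M1 M2) pol a (Some (inr w)) <-> supp M2 pol a w.
Proof.
  induction a as [p|a IHa|a1 IHa1 a2 IHa2|a1 IHa1 a2 IHa2|a1 IHa1 a2 IHa2|a IHa|a IHa];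
    intros pol w; destruct pol; cbn [supp negb].
  - cbn. tauto.
  - cbn. tauto.
  - apply IHa.
  - apply IHa.
  - rewrite IHa1, IHa2. tauto.
  - rewrite IHa1, IHa2. tauto.
  - rewrite IHa1, IHa2. tauto.
  - rewrite IHa1, IHa2. tauto.
  - split.
    + intros H w' Hle H1. apply IHa2. apply (H (Some (inr w'))); [exact Hle | apply IHa1; exact H1].
    + intros H [[w'|w']|] Hle H1; cbn in Hle; try contradiction.
      apply IHa2. apply H; [exact Hle | apply IHa1; exact H1].
  - rewrite IHa1, IHa2. tauto.
  - split.
    + intros H w' Hle w'' HR. apply IHa. apply (H (Some (inr w')) Hle (Some (inr w'')) HR).
    + intros H [[w'|w']|] Hle; cbn in Hle; try contradiction.
      intros [[w''|w'']|] HR; cbn in HR; try contradiction. apply IHa. eapply H; eauto.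
  - split.
    + intros H w' Hle. destruct (H (Some (inr w')) Hle) as [[[w''|w'']|] [HR Hs]];
        cbn in HR; try contradiction. exists w''. split; [exact HR | apply IHa in Hs; exact Hs].
    + intros H [[w'|w']|] Hle; cbn in Hle; try contradiction.
      destruct (H w' Hle) as [w'' [HR Hs]]. exists (Some (inr w'')). split; [exact HR | apply IHa; exact Hs].
  - split.
    + intros H w' Hle. destruct (H (Some (inr w')) Hle) as [[[w''|w'']|] [HR Hs]];
        cbn in HR; try contradiction. exists w''. split; [exact HR | apply IHa in Hs; exact Hs].
    + intros H [[w'|w']|] Hle; cbn in Hle; try contradiction.
      destruct (H w' Hle) as [w'' [HR Hs]]. exists (Some (inr w'')). split; [exact HR | apply IHa; exact Hs].
  - split.
    + intros H w' Hle w'' HR. apply IHa. apply (H (Some (inr w')) Hle (Some (inr w'')) HR).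
    + intros H [[w'|w']|] Hle; cbn in Hle; try contradiction.
      intros [[w''|w'']|] HR; cbn in HR; try contradiction. apply IHa. eapply H; eauto.
Qed.

Lemma persist (M : model) (a : form) : forall pol w w',
  le (mframe M) w w' -> supp M pol a w -> supp M pol a w'.
Proof.
  destruct (le_preorder (mframe M)) as [Hr Ht].
  induction a as [p|a IHa|a1 IHa1 a2 IHa2|a1 IHa1 a2 IHa2|a1 IHa1 a2 IHa2|a IHa|a IHa];
    intros pol w w' Hle; destruct pol; cbn [supp negb].
  - apply vpos_up; auto.
  - apply vneg_up; auto.
  - apply IHa; auto.
  - apply IHa; auto.
  - intros [? ?]; split; eauto.
  - intros [?|?]; [left|right]; eauto.
  - intros [?|?]; [left|right]; eauto.
  - intros [? ?]; split; eauto.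
  - intros H v Hv. apply H. eapply Ht; eauto.
  - intros [? ?]; split; eauto.
  - intros H v Hv. apply H. eapply Ht; eauto.
  - intros H v Hv. apply H. eapply Ht; eauto.
  - intros H v Hv. apply H. eapply Ht; eauto.
  - intros H v Hv. apply H. eapply Ht; eauto.
Qed.

Lemma same_glue {A B : Type} r (R1 S1 : A -> A -> Prop) (R2 S2 : B -> B -> Prop) :
  same_rel R1 S1 -> same_rel R2 S2 -> same_rel (glue r R1 R2) (glue r S1 S2).
Proof.
  intros h1 h2 [[a|a]|] [[b|b]|]; cbn; try tauto; auto.
Qed.

Lemma glue_class (L : logic) (M1 M2 : model) :
  in_class L (mframe M1) -> in_class L (mframe M2) ->
  in_class L (mframe (glue_model M1 M2)).
Proof.
  destruct L; cbn -[same_rel glue]; intros; repeat match goal with H : _ /\ _ |- _ => destruct H end;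
    repeat match goal with |- _ /\ _ => split end; try apply same_glue; auto.
Qed.

Lemma key (L : logic) (pol : bool) (phi chi : form) :
  (forall M : model, in_class L (mframe M) -> forall w,
      supp M pol phi w \/ supp M pol chi w) ->
  (forall M : model, in_class L (mframe M) -> forall w, supp M pol phi w) \/
  (forall M : model, in_class L (mframe M) -> forall w, supp M pol chi w).
Proof.
  intros H. apply NNPP. intros Hn. apply not_or_and in Hn. destruct Hn as [H1 H2].
  apply not_all_ex_not in H1. destruct H1 as [M1 H1].
  apply imply_to_and in H1. destruct H1 as [C1 H1].
  apply not_all_ex_not in H1. destruct H1 as [w1 H1].
  apply not_all_ex_not in H2. destruct H2 as [M2 H2].
  apply imply_to_and in H2. destruct H2 as [C2 H2].
  apply not_all_ex_not in H2. destruct H2 as [w2 H2].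
  destruct (H (glue_model M1 M2) (glue_class L M1 M2 C1 C2) None) as [Hs|Hs].
  - apply H1. apply (emb_l M1 M2).
    apply (persist (glue_model M1 M2) phi pol None); [cbn; exact I | exact Hs].
  - apply H2. apply (emb_r M1 M2).
    apply (persist (glue_model M1 M2) chi pol None); [cbn; exact I | exact Hs].
Qed.

Theorem theorem8 (L : logic) (phi chi : form) :
  (valid L (Or phi chi) <-> valid L phi \/ valid L chi) /\
  (valid L (Neg (And phi chi)) <-> valid L (Neg phi) \/ valid L (Neg chi)).
Proof.
  unfold valid. split; split.
  - intros H. apply (key L true). intros M C w. exact (H M C w).
  - intros [H|H] M C w; cbn; [left|right]; apply H; auto.
  - intros H. apply (key L false). intros M C w. exact (H M C w).
  - intros [H|H] M C w; cbn; [left|right]; apply (H M C w).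
Qed.
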